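(* Let $\Omega$ be a finite set, $G\le\mathrm{Sym}(\Omega)$ and $1\le k\le |\Omega|$. The following are equivalent: (1) $G$ has the ordered $k$-ut property; (2) for every transformation $t\in T(\Omega)$ of rank $k$, $\langle G,t\rangle=EG$, where $E$ is the set of idempotents of $\langle G,t\rangle$.
   Context: $T(\Omega)$ is the full transformation monoid on $\Omega$, with maps acting on the right; the rank of $t$ is $|\Omega t|$. $\langle G,t\rangle$ is the subsemigroup generated by $G\cup\{t\}$ and $EG=\{eg:e\in E, g\in G\}$. $G$ has the ordered $k$-ut property if for every $k$-tuple $(a_1,\dots,a_k)$ of distinct points of $\Omega$ and every ordered partition $(P_1,\dots,P_k)$ of $\Omega$ into $k$ nonempty parts there is $g\in G$ with $a_ig\in P_i$ for all $i$. *)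

(* Defs.v *)
From mathcomp Require Import all_boot all_fingroup.
Set Implicit Arguments. Unset Strict Implicit. Unset Printing Implicit Defensive.

Section TransfDefs.
Variable T : finType.

(* Full transformation monoid T(Omega): maps T -> T, acting on the right:
   x (f * g) = (x f) g, i.e. tcomp f g = "first f, then g". *)
Definition transf := {ffun T -> T}.

Definition tcomp (f g : transf) : transf := [ffun x => g (f x)].

Definition perm_tr (p : {perm T}) : transf := [ffun x => p x].

Definition trank (t : transf) : nat := #|[set t x | x in T]|.

Inductive gen_sg (G : {set {perm T}}) (t : transf) : transf -> Prop :=
  | gen_perm : forall g, g \in G -> gen_sg G t (perm_tr g)
  | gen_t : gen_sg G t t
  | gen_comp : forall f h, gen_sg G t f -> gen_sg G t h -> gen_sg G t (tcomp f h).

Definition idempotent_tr (e : transf) : Prop := tcomp e e = e.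

Definition in_EG (G : {set {perm T}}) (t : transf) (f : transf) : Prop :=
  exists e g, [/\ gen_sg G t e, idempotent_tr e, g \in G & f = tcomp e (perm_tr g)].

Definition ordered_kut (G : {set {perm T}}) (k : nat) : Prop :=
  forall (a : k.-tuple T) (P : 'I_k -> {set T}),
    uniq a ->
    (forall i, P i != set0) ->
    (forall i j, i != j -> [disjoint P i & P j]) ->
    (forall x : T, exists i, x \in P i) ->
    exists2 g, g \in G & forall i : 'I_k, g (tnth a i) \in P i.

End TransfDefs.

(* Main.v *)
Require Import Defs.
From mathcomp Require Import all_boot all_fingroup.
Set Implicit Arguments. Unset Strict Implicit. Unset Printing Implicit Defensive.

Section S.
Variable T : finType.

Lemma disjI (A B : {set T}) : (forall x, x \in A -> x \in B -> False) -> [disjoint A & B].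
Proof.
move=> H; rewrite disjoint_subset; apply/subsetP => x xA; rewrite !inE.
by apply/negP => xB; apply: (H x).
Qed.

Lemma notin_small (S : {set T}) : #|S| < #|T| -> exists b, b \notin S.
Proof.
move=> Hc; case: (pickP (fun b => b \notin S)) => [b Hb|H]; first by exists b.
have : [set: T] \subset S by apply/subsetP => x _; move: (H x); case: (x \in S).
by move/subset_leq_card; rewrite cardsT leqNgt Hc.
Qed.

Definition kutf (G : {set {perm T}}) k :=
  forall (a : 'I_k -> T) (P : 'I_k -> {set T}), injective a ->
    (forall i, P i != set0) ->
    (forall i j, i != j -> [disjoint P i & P j]) ->
    (forall x : T, exists i, x \in P i) ->
    exists2 g, g \in G & forall i : 'I_k, g (a i) \in P i.

Lemma kut_kutf G k : ordered_kut G k -> kutf G k.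
Proof.
move=> H a P ia Pn Pd Pc.
have [|g gG Hg] := H [tuple a i | i < k] P _ Pn Pd Pc.
  by apply/tuple_uniqP => i j; rewrite !tnth_mktuple => /ia.
by exists g => // i; move: (Hg i); rewrite tnth_mktuple.
Qed.

Lemma kutf_step (G : {group {perm T}}) j : j.+1 <= #|T| -> kutf G j.+1 -> kutf G j.
Proof.
move=> Hn H a P ia Pn Pd Pc.
have [b Hb] : exists b, b \notin [set a i | i in 'I_j].
  apply: notin_small; apply: leq_ltn_trans Hn; apply: leq_trans (leq_imset_card _ _) _.
  by rewrite card_ord.
have [i00 | j0] := posnP j.
  by exists 1%g => //; case=> i Hi; exfalso; move: Hi; rewrite i00.
pose d : 'I_j := Ordinal j0.
pose r i := odflt b [pick x in P i].
have rP : forall i, r i \in P i.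
  move=> i; rewrite /r; case: pickP => [x //|/= Hx].
  by case/set0Pn: (Pn i) => y; rewrite (Hx y).
have [x0 Hx0] : exists x0, x0 \notin [set r i | i in 'I_j].
  apply: notin_small; apply: leq_ltn_trans Hn; apply: leq_trans (leq_imset_card _ _) _.
  by rewrite card_ord.
have [i0 Hi0] := Pc x0.
pose proj (i : 'I_j.+1) : 'I_j := odflt i0 (unlift ord_max i).
pose a' (i : 'I_j.+1) : T := if unlift ord_max i is Some i' then a i' else b.
pose P' (i : 'I_j.+1) : {set T} := [set x in P (proj i) | (x == x0) == (i == ord_max)].
have Hlift : forall i : 'I_j.+1, i != ord_max -> i = lift ord_max (proj i).
  by move=> i; rewrite /proj; case: unliftP => [i' ->|->] //; rewrite eqxx.
have [||||g gG Hg] := H a' P'.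
- move=> i1 i2; rewrite /a'.
  case: unliftP => [i1' ->|->]; case: unliftP => [i2' ->|->] //.
  + by move/ia ->.
  + by move=> E; move: Hb; rewrite -E imset_f.
  + by move=> E; move: Hb; rewrite E imset_f.
- move=> i; apply/set0Pn; rewrite /P'.
  case: (unliftP ord_max i) => [i' Ei|Ei].
    exists (r i'); rewrite inE /proj Ei liftK /= rP /=.
    have -> : (r i' == x0) = false.
      by apply/negP => /eqP E; move: Hx0; rewrite -E imset_f.
    by rewrite (eq_sym (lift _ _)) (negbTE (neq_lift _ _)).
  by exists x0; rewrite inE Ei /proj unlift_none /= Hi0 !eqxx.
- move=> i1 i2 Hne; apply: disjI => x; rewrite !inE => /andP [x1 e1] /andP [x2 e2].
  have Ep : proj i1 = proj i2.
    apply/eqP; apply/negP => /negP ne.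
    by move: (disjointFr (Pd _ _ ne) x1); rewrite x2.
  move: e1 e2 Hne; case: (x == x0) => /eqP e1 /eqP e2.
    by rewrite (eqP (esym e1)) (eqP (esym e2)) eqxx.
  have n1 : i1 != ord_max by rewrite -e1.
  have n2 : i2 != ord_max by rewrite -e2.
  by rewrite (Hlift _ n1) (Hlift _ n2) Ep eqxx.
- move=> x; case: (eqVneq x x0) => [->|nx].
    by exists ord_max; rewrite inE /proj unlift_none /= Hi0 !eqxx.
  have [i Hi] := Pc x.
  exists (lift ord_max i); rewrite inE /proj liftK /= Hi (negbTE nx).
  by rewrite (eq_sym (lift _ _)) (negbTE (neq_lift _ _)).
exists g => // i; move: (Hg (lift ord_max i)).
by rewrite /a' /P' /proj liftK inE /= => /andP [].
Qed.

Lemma kutf_down_aux (G : {group {perm T}}) j d : j + d <= #|T| -> kutf G (j + d) -> kutf G j.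
Proof.
elim: d => [|d IH]; first by rewrite addn0.
by rewrite addnS => Hn Hs; apply: IH; [apply: ltnW | apply: kutf_step].
Qed.

Lemma kutf_down (G : {group {perm T}}) k j : k <= #|T| -> j <= k -> kutf G k -> kutf G j.
Proof.
move=> Hk Hjk H; apply: (kutf_down_aux (d := k - j)); by rewrite subnKC.
Qed.


Lemma tcomp_perm (g h : {perm T}) : tcomp (perm_tr g) (perm_tr h) = perm_tr (g * h).
Proof. by apply/ffunP => x; rewrite !ffunE permM. Qed.

Lemma trank_compl (f h : transf T) : trank (tcomp f h) <= trank f.
Proof.
rewrite /trank; have -> : [set tcomp f h x | x in T] = h @: [set f x | x in T].
  by rewrite -imset_comp; apply: eq_imset => x; rewrite ffunE.
exact: leq_imset_card.
Qed.

Lemma trank_compr (f h : transf T) : trank (tcomp f h) <= trank h.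
Proof.
rewrite /trank; apply: subset_leq_card; apply/subsetP => y /imsetP [x _ ->].
by rewrite ffunE imset_f.
Qed.

Lemma gen_cases (G : {group {perm T}}) t f : gen_sg G t f ->
  (exists2 g, g \in G & f = perm_tr g) \/ trank f <= trank t.
Proof.
elim => [g gG|| f1 h1 _ [[g1 G1 ->]|r1] _ [[g2 G2 ->]|r2]].
- by left; exists g.
- by right.
- by left; exists (g1 * g2)%g; [apply: groupM | rewrite tcomp_perm].
- by right; apply: leq_trans (trank_compr _ _) r2.
- by right; apply: leq_trans (trank_compl _ _) r1.
- by right; apply: leq_trans (trank_compl _ _) r1.
Qed.

Lemma fwd (G : {group {perm T}}) t f : gen_sg G t f -> kutf G (trank f) -> in_EG G t f.
Proof.
move=> Hf H.
have [||||g gG Hg] := H (@enum_val _ (mem [set f x | x in T]))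
   (fun i => [set x | f x == enum_val i]).
- exact: enum_val_inj.
- move=> i; apply/set0Pn; have /imsetP [x _ Ex] := enum_valP i.
  by exists x; rewrite inE -Ex.
- move=> i1 i2 ne; apply: disjI => x; rewrite !inE => /eqP -> /eqP /enum_val_inj E.
  by move: ne; rewrite E eqxx.
- move=> x; have Ax : f x \in [set f x | x in T] by rewrite imset_f.
  by exists (enum_rank_in Ax (f x)); rewrite inE enum_rankK_in.
have Hfix : forall x, f (g (f x)) = f x.
  move=> x; have Ax : f x \in [set f x | x in T] by rewrite imset_f.
  move: (Hg (enum_rank_in Ax (f x))); rewrite inE enum_rankK_in //.
  by move/eqP.
exists (tcomp f (perm_tr g)), g^-1%g; split.
- by apply: gen_comp => //; apply: gen_perm.
- by apply/ffunP => x; rewrite !ffunE Hfix.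
- by rewrite groupV.
- by apply/ffunP => x; rewrite !ffunE permK.
Qed.

End S.

Theorem lemma3p1 (T : finType) (G : {group {perm T}}) (k : nat) :
  0 < k <= #|T| ->
  (ordered_kut G k <->
   forall t : transf T, trank t = k ->
     forall f : transf T, gen_sg G t f <-> in_EG G t f).
Proof.
case/andP => k0 kT; split.
  move=> H t Ht f; split.
    move=> Hf; case: (gen_cases Hf) => [[g gG ->]|r].
      exists (perm_tr 1%g), g; split.
      - by apply: gen_perm; apply: group1.
      - by apply/ffunP => x; rewrite !ffunE perm1.
      - by [].
      - by apply/ffunP => x; rewrite !ffunE perm1.
    apply: fwd => //; apply: (kutf_down kT); first by rewrite -Ht.
    exact: kut_kutf.
  by case=> e [g [He _ gG ->]]; apply: gen_comp => //; apply: gen_perm.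
move=> H a P ua Pn Pd Pc.
pose i0 : 'I_k := Ordinal k0.
pose idx x := odflt i0 [pick i | x \in P i].
have idxP : forall x, x \in P (idx x).
  move=> x; rewrite /idx; case: pickP => [i //|/= Hx].
  by case: (Pc x) => i; rewrite Hx.
have idxE : forall x i, x \in P i -> idx x = i.
  move=> x i xi; apply/eqP; apply/negP => /negP ne.
  by move: (disjointFr (Pd _ _ ne) (idxP x)); rewrite xi.
have ia := tuple_uniqP _ ua.
pose r i := odflt (tnth a i) [pick x in P i].
have rP : forall i, r i \in P i.
  move=> i; rewrite /r; case: pickP => [x //|/= Hx].
  by case/set0Pn: (Pn i) => y; rewrite (Hx y).
pose t : transf T := [ffun x => tnth a (idx x)].
have Ht : trank t = k.
  rewrite /trank; have -> : [set t x | x in T] = tnth a @: (idx @: T).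
    by rewrite -imset_comp; apply: eq_imset => x; rewrite ffunE.
  rewrite card_imset //; have -> : idx @: T = [set: 'I_k].
    apply/setP => i; rewrite inE; apply/imsetP; exists (r i) => //.
    by rewrite (idxE _ _ (rP i)).
  by rewrite cardsT card_ord.
have [e [h [_ He hG Et]]] := (proj1 (H t Ht t)) (gen_t G t).
have Ee : forall x, e x = h^-1%g (t x).
  by move=> x; rewrite Et !ffunE permK.
exists h^-1%g; first by rewrite groupV.
move=> i.
have tr : t (r i) = tnth a i by rewrite ffunE (idxE _ _ (rP i)).
have HH : e (e (r i)) = e (r i) by rewrite -[in RHS]He ffunE.
move: HH.
rewrite !Ee tr => /perm_inj; rewrite ffunE => /ia E.
by rewrite -{2}E idxP.
Qed.
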